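(* Let $(X_1,Y_1),\dots,(X_{n+1},Y_{n+1})$ be data with risks $L_i=\mathcal{L}(f,X_i,Y_i)\in[0,1]$ (the value $L_{n+1}$ is not used), $s:\mathcal{X}\to[0,1]$ a score, $\alpha,\gamma\in(0,1)$, and $E_{\gamma,n+1}$ as defined below. If $\gamma\le\alpha$, then $$\mathbf{1}\{E_{\gamma,n+1}\ge 1/\alpha\}=\mathbf{1}\Big\{\frac{1+\sum_{i=1}^n L_i\mathbf{1}\{s(X_i)\le s(X_{n+1})\}}{n+1}\le\gamma\Big\}.$$ If $\gamma>\alpha$, then $E_{\gamma,n+1}\ge1/\alpha$ holds if and only if both $\frac{1+\sum_{i=1}^n L_i\mathbf{1}\{s(X_i)\le s(X_{n+1})\}}{n+1}\le\gamma$ and, for all $t\in\mathcal{M}$ and all $\ell\in[0,1]$, $\frac{\ell+\sum_{i=1}^n L_i\mathbf{1}\{s(X_i)\le t\}}{n+1}\notin(\alpha,\gamma]$.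
   Context: Let $\mathcal{M}=\{s(X_i)\}_{i=1}^{n+1}$. For $t\in\mathbb{R}$, $\ell\in[0,1]$, define $F(t;\ell)=\frac{1}{n+1}\big(\sum_{i=1}^n L_i\mathbf{1}\{s(X_i)\le t\}+\ell\,\mathbf{1}\{s(X_{n+1})\le t\}\big)$ and $t_\gamma(\ell)=\max\{t\in\mathcal{M}:F(t;\ell)\le\gamma\}$ with $\max\emptyset=-\infty$. Define $$E_{\gamma,n+1}=\inf_{\ell\in[0,1]}\frac{(n+1)\mathbf{1}\{s(X_{n+1})\le t_\gamma(\ell)\}}{\sum_{i=1}^n L_i\mathbf{1}\{s(X_i)\le t_\gamma(\ell)\}+\ell\,\mathbf{1}\{s(X_{n+1})\le t_\gamma(\ell)\}},$$ where each ratio is $0$ when its numerator is $0$ and $+\infty$ when its numerator is positive and its denominator is $0$; and $E_{\gamma,n+1}=0$ if $\inf_{\ell}t_\gamma(\ell)=-\infty$. *)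

(* Defs.v *)
From HB Require Import structures.
From mathcomp Require Import all_boot all_order all_algebra.
From mathcomp Require Import all_classical all_reals ereal.
Set Implicit Arguments. Unset Strict Implicit. Unset Printing Implicit Defensive.
Import Order.TTheory GRing.Theory Num.Theory.
Local Open Scope ring_scope.
Local Open Scope classical_set_scope.

(* Indexing convention: calibration points are 0..n-1 (paper: 1..n),
   the test point is index n (paper: n+1).  S i := s(X_i). *)

Section Econf.
Variables (R : realType) (n : nat) (L : nat -> R) (S : nat -> R).

Definition Fcdf (t : R) (l : R) : R :=
  (\sum_(i < n) L i * ((S i <= t)%R)%:R + l * ((S n <= t)%R)%:R) / n.+1%:R.

(* t_gamma(l) = max { t in M : F(t;l) <= gamma }, max of empty set = -oo *)
Definition tgamma (gamma l : R) : \bar R :=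
  \big[Order.max/-oo%E]_(i < n.+1 | Fcdf (S i) l <= gamma) (S i)%:E.

(* the ratio for a fixed l, with conventions 0/x = 0, positive/0 = +oo *)
Definition eratio (gamma l : R) : \bar R :=
  let t := tgamma gamma l in
  let num : R := n.+1%:R * (((S n)%:E <= t)%E)%:R in
  let den : R := \sum_(i < n) L i * (((S i)%:E <= t)%E)%:R
                 + l * (((S n)%:E <= t)%E)%:R in
  if num == 0 then 0%E else if den == 0 then +oo%E else (num / den)%:E.

Definition Egamma (gamma : R) : \bar R :=
  if ereal_inf [set tgamma gamma l | l in `[0, 1]] == -oo%E then 0%E
  else ereal_inf [set eratio gamma l | l in `[0, 1]].
End Econf.

(* Main.v *)
Require Import Defs.
From HB Require Import structures.
From mathcomp Require Import all_boot all_order all_algebra.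
From mathcomp Require Import all_classical all_reals ereal.
Import Order.TTheory GRing.Theory Num.Theory.
Local Open Scope ring_scope.
Local Open Scope classical_set_scope.

Lemma tg_cases (R : realType) n (L S : nat -> R) g l :
  tgamma n L S g l = -oo%E \/
  exists j, (j <= n)%N /\ Fcdf n L S (S j) l <= g /\ tgamma n L S g l = (S j)%:E.
Proof.
rewrite /tgamma.
apply: (big_ind (fun x => x = -oo%E \/ exists j, (j <= n)%N /\ Fcdf n L S (S j) l <= g /\ x = (S j)%:E)).
- by left.
- by move=> x y Hx Hy; rewrite /Order.max; case: ifP.
- move=> i Hi; right; exists i; split; last by split.
  by rewrite -ltnS ltn_ord.
Qed.

Lemma tg_ge (R : realType) n (L S : nat -> R) g l j :
  (j <= n)%N -> Fcdf n L S (S j) l <= g -> ((S j)%:E <= tgamma n L S g l)%E.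
Proof.
move=> Hj HF; rewrite /tgamma.
have Hj' : (j < n.+1)%N by rewrite ltnS.
exact: (@le_bigmax_cond _ _ _ _ (Ordinal Hj') (fun i : 'I_n.+1 => Fcdf n L S (S i) l <= g)
   (fun i : 'I_n.+1 => (S i)%:E)).
Qed.

Lemma F_mono_t (R : realType) n (L S : nat -> R) t t' l :
  (forall i, (i < n)%N -> 0 <= L i) -> 0 <= l -> t <= t' ->
  Fcdf n L S t l <= Fcdf n L S t' l.
Proof.
move=> HL Hl Ht; rewrite /Fcdf ler_pM2r ?invr_gt0 ?ltr0n //.
have ind : forall x, ((x <= t)%R%:R : R) <= (x <= t')%R%:R.
  move=> x; case: (leP x t) => H /=; last by rewrite ler0n.
  by rewrite (le_trans H Ht).
apply: lerD; first apply: ler_sum => i _; first by apply: ler_wpM2l; [exact: HL|exact: ind].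
exact: ler_wpM2l.
Qed.

Lemma F_mono_l (R : realType) n (L S : nat -> R) t l l' :
  l <= l' -> Fcdf n L S t l <= Fcdf n L S t l'.
Proof.
move=> Hl; rewrite /Fcdf ler_pM2r ?invr_gt0 ?ltr0n // lerD2l.
by apply: ler_wpM2r => //; rewrite ler0n.
Qed.
Lemma eratio_ge (R : realType) n (L S : nat -> R) g l a :
  (forall i, (i < n)%N -> 0 <= L i) -> 0 <= l -> 0 < a ->
  ((a^-1)%:E <= eratio n L S g l)%E <->
  exists j, tgamma n L S g l = (S j)%:E /\ S n <= S j /\ Fcdf n L S (S j) l <= a.
Proof.
move=> HL Hl Ha.
have Hai : 0 < a^-1 by rewrite invr_gt0.
case: (tg_cases _ n L S g l) => [Htg | [j [Hj [HF Htg]]]].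
  rewrite /eratio Htg /= mulr0 eqxx; split.
    by rewrite lee_fin leNgt Hai.
  by case=> j [].
rewrite /eratio Htg /= lee_fin.
case: (leP (S n) (S j)) => Hnj /=; last first.
  rewrite mulr0 eqxx lee_fin leNgt Hai; split => //.
  by case=> k [[<-]] []; rewrite leNgt Hnj.
rewrite mulr1 pnatr_eq0 /=.
have Hden : \sum_(i < n) L i * ((S i)%:E <= (S j)%:E)%E%:R + l * 1 = Fcdf n L S (S j) l * n.+1%:R.
  rewrite /Fcdf Hnj mulr1 -mulrA mulVf ?pnatr_eq0 // mulr1.
  by congr (_ + _); apply: eq_bigr => i _; rewrite lee_fin.
rewrite Hden mulf_eq0 pnatr_eq0 orbF.
have HF0 : 0 <= Fcdf n L S (S j) l.
  rewrite /Fcdf divr_ge0 ?ler0n // addr_ge0 ?mulr_ge0 ?ler0n //.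
  by apply: sumr_ge0 => i _; rewrite mulr_ge0 ?ler0n ?HL.
case: eqP => HFz.
  split=> [_|_]; last exact: leey.
  by exists j; rewrite HFz (ltW Ha).
have HFp : 0 < Fcdf n L S (S j) l by rewrite lt_neqAle eq_sym HF0 andbT; apply/eqP.
rewrite lee_fin ler_pdivlMr; last by rewrite mulr_gt0 ?ltr0n.
rewrite mulrA -[X in _ <= X]mul1r ler_pM2r ?ltr0n // mulrC ler_pdivrMr // mul1r.
split=> [H|[k [[<-] [_ H]]]]; first by exists j.
by [].
Qed.

Lemma tg_val (R : realType) n (L S : nat -> R) g l j :
  tgamma n L S g l = (S j)%:E ->
  Fcdf n L S (S j) l <= g /\ exists2 i, (i <= n)%N & S j = S i.
Proof.
case: (tg_cases _ n L S g l) => [-> //| [k [Hk [HF ->]]] [<-]].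
by split => //; exists k.
Qed.

Lemma tg_anti (R : realType) n (L S : nat -> R) g l l' :
  l <= l' -> (tgamma n L S g l' <= tgamma n L S g l)%E.
Proof.
move=> Hll.
case: (tg_cases _ n L S g l') => [->| [j [Hj [HF ->]]]]; first exact: leNye.
apply: tg_ge => //; exact: le_trans (F_mono_l _ _ _ _ _ _ _ Hll) HF.
Qed.

Lemma inf_tg (R : realType) n (L S : nat -> R) g :
  ereal_inf [set tgamma n L S g l | l in `[0, 1]] = tgamma n L S g 1.
Proof.
apply/le_anti/andP; split.
  apply: ereal_inf_lbound; exists 1 => //.
  by rewrite /= in_itv /= ler01 lexx.
apply/ereal_infP => y [l Hl <-]; apply: tg_anti.
by move: Hl; rewrite /= in_itv /= => /andP[].
Qed.
Lemma E_ge (R : realType) n (L S : nat -> R) g a :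
  (forall i, (i < n)%N -> 0 <= L i) -> 0 < a ->
  ((a^-1)%:E <= Egamma n L S g)%E <->
  (((S n)%:E <= tgamma n L S g 1)%E /\
   forall l, 0 <= l <= 1 -> forall j, tgamma n L S g l = (S j)%:E -> Fcdf n L S (S j) l <= a).
Proof.
move=> HL Ha.
rewrite /Egamma inf_tg; case: eqP => H1.
  rewrite H1 lee_fin leNgt invr_gt0 Ha /=; split => // [[]].
  by rewrite leeNy_eq.
split.
  move/ereal_infP => H.
  have Hl : forall l, 0 <= l <= 1 -> exists j, tgamma n L S g l = (S j)%:E /\ S n <= S j /\ Fcdf n L S (S j) l <= a.
    move=> l /andP[Hl0 Hl1]; apply/(eratio_ge _ _ _ _ _ _ _ HL Hl0 Ha).
    apply: H; exists l => //; by rewrite /= in_itv /= Hl0 Hl1.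
  split.
    have [j [-> [Hj _]]] := Hl 1 (andb_true_intro (conj ler01 (lexx _))).
    by rewrite lee_fin.
  move=> l Hl01 j Htg.
  have [k [Htg' [_ Hk]]] := Hl l Hl01.
  by move: Htg'; rewrite Htg => -[->].
case=> Hn Hall; apply/ereal_infP => y [l Hl <-].
move: Hl; rewrite /= in_itv /= => /andP[Hl0 Hl1].
apply/(eratio_ge _ _ _ _ _ _ _ HL Hl0 Ha).
have Hnl := le_trans Hn (tg_anti _ n L S g _ _ Hl1).
case: (tg_cases _ n L S g l) => [Htg| [j [Hj [HF Htg]]]].
  by move: Hnl; rewrite Htg leeNy_eq.
exists j; split => //; split; first by move: Hnl; rewrite Htg lee_fin.
by apply: (Hall l); rewrite ?Hl0 ?Hl1.
Qed.
Theorem proposition4p1 (R : realType) (T : Type) (n : nat)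
  (X : nat -> T) (L : nat -> R) (s : T -> R) (alpha gamma : R) :
  (forall i, (i < n)%N -> 0 <= L i <= 1) ->
  (forall x, 0 <= s x <= 1) ->
  0 < alpha < 1 -> 0 < gamma < 1 ->
  let S := fun i => s (X i) in
  let p := (1 + \sum_(i < n) L i * ((S i <= S n)%R)%:R) / n.+1%:R in
  (gamma <= alpha ->
     ((Egamma n L S gamma >= (alpha^-1)%:E)%E = (p <= gamma))) /\
  (alpha < gamma ->
     ((Egamma n L S gamma >= (alpha^-1)%:E)%E <->
      (p <= gamma /\
       forall t, (exists2 i, (i <= n)%N & t = S i) ->
       forall l, 0 <= l <= 1 ->
         ~ (alpha < (l + \sum_(i < n) L i * ((S i <= t)%R)%:R) / n.+1%:R <= gamma)))).
Proof.
move=> HL01 _ /andP[Ha0 Ha1] _ S p.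
have HL : forall i, (i < n)%N -> 0 <= L i by move=> i /HL01 /andP[].
have HpF : p = Fcdf n L S (S n) 1 by rewrite /p /Fcdf lexx mulr1 addrC.
have pA : (p <= gamma) <-> ((S n)%:E <= tgamma n L S gamma 1)%E.
  split=> [Hp|].
    by apply: tg_ge => //; rewrite -HpF.
  case: (tg_cases _ n L S gamma 1) => [->|[j [Hj [HF ->]]]]; first by rewrite leeNy_eq.
  rewrite lee_fin => Hnj; rewrite HpF; apply: le_trans HF.
  exact: F_mono_t.
have EG := E_ge _ n L S gamma _ HL Ha0.
split.
  move=> Hga; apply/idP/idP.
    by case/EG => /pA.
  move=> /pA Hn; apply/EG; split => // l _ j /tg_val [HF _].
  exact: le_trans HF Hga.
move=> Hag; split.
  case/EG => Hn Hall; split; first by apply/pA.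
  move=> t [k Hk ->] l /andP[Hl0 Hl1] /andP[H1 H2].
  have key : forall u, (u <= n)%N -> Fcdf n L S (S u) l <= gamma -> Fcdf n L S (S u) l <= alpha.
    move=> u Hu HFu; have := tg_ge _ n L S gamma l u Hu HFu.
    case: (tg_cases _ n L S gamma l) => [->|[j [Hj [HF Htg]]]]; first by rewrite leeNy_eq.
    rewrite Htg lee_fin => Huj; apply: le_trans (Hall l (andb_true_intro (conj Hl0 Hl1)) j Htg).
    exact: F_mono_t.
  case: (leP (S n) (S k)) => Hnk.
    have EF : (l + \sum_(i < n) L i * ((S i <= S k)%R)%:R) / n.+1%:R = Fcdf n L S (S k) l.
      by rewrite /Fcdf Hnk mulr1 addrC.
    rewrite EF in H1 H2.
    by move: H1; rewrite ltNge (key k Hk H2).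
  have HGn : (l + \sum_(i < n) L i * ((S i <= S k)%R)%:R) / n.+1%:R <= Fcdf n L S (S n) l.
    rewrite /Fcdf lexx mulr1 [X in _ <= X / _]addrC ler_pM2r ?invr_gt0 ?ltr0n // lerD2l.
    apply: ler_sum => i _; apply: ler_wpM2l; first exact: HL.
    case: (leP (S i) (S k)) => H /=; last by rewrite ler0n.
    by rewrite (le_trans H (ltW Hnk)).
  have HFn1 : Fcdf n L S (S n) l <= gamma.
    apply: le_trans (F_mono_l _ _ _ _ _ _ _ Hl1) _; rewrite -HpF; exact/pA.
  by move: H1; rewrite ltNge (le_trans HGn (key n (leqnn n) HFn1)).
case=> /pA Hn Hall; apply/EG; split => // l /andP[Hl0 Hl1] j Htg.
have [HF [i Hi Hji]] := tg_val _ _ _ _ _ _ _ Htg.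
have Hnj : S n <= S j.
  by move: (le_trans Hn (tg_anti _ n L S gamma _ _ Hl1)); rewrite Htg lee_fin.
have := Hall (S j) (ex_intro2 _ _ i Hi Hji) l (andb_true_intro (conj Hl0 Hl1)).
have -> : (l + \sum_(i < n) L i * ((S i <= S j)%R)%:R) / n.+1%:R = Fcdf n L S (S j) l.
  by rewrite /Fcdf Hnj mulr1 addrC.
by rewrite HF andbT => /negP; rewrite -leNgt.
Qed.
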